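(* For $d\in(0,2]$ let $M(4,d)$ be the cardinality of the four-dimensional spherical code by Hopf foliations (SCHF) with minimum distance $d$, as defined in the context. Then the asymptotic center density of this family, $$\overline{\Delta}_c(\mathrm{SCHF}[4])=\lim_{d\to0}\frac{M(4,d)}{\mathbb{S}_4}\left(\frac d2\right)^{3},$$ equals $\dfrac{1}{4\sqrt3}$.
   Context: $\mathbb{S}_n=\frac{n\pi^{n/2}}{\Gamma(1+n/2)}$ is the surface area of the unit sphere $S^{n-1}\subset\mathbb{R}^n$ (so $\mathbb{S}_4=2\pi^2$). Four-dimensional SCHF: given $d\in(0,2]$, put $\Delta\eta=2\arcsin(d/2)$, $t=t(d)=\lfloor\pi/(4\arcsin(d/2))\rfloor$ and $\eta_i=\pi/4+i\Delta\eta$ for $i=0,1,\dots,\lfloor t/2\rfloor$. For $\eta\in(0,\pi/2]$ let $m(d,\eta)=\lfloor\pi/\arcsin(d/(2\cos\eta))\rfloor$ if $d\le2\cos\eta$ and $1$ otherwise; let $n(d,\eta)=\max(2\lfloor\min\{n_1,n_2\}/2\rfloor,1)$ with $n_1=\lfloor\pi/\arcsin[((d^2/4)\csc^2\eta-\cot^2\eta\sin^2(\pi/2m))^{1/2}]\rfloor$ (where $m=m(d,\eta)$), and $n_2=\lfloor2\pi/\arcsin(d/(2\sin\eta))\rfloor$ if $d\le 2\sin\eta$, $n_2=1$ otherwise. On the torus $T_{\eta_i}=S^1_{\cos\eta_i}\times S^1_{\sin\eta_i}\subset S^3$ the code consists of the $m_in_i$ points $(e^{\mathbf{i}(2\pi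 j/m_i+\pi k/m_i)}\cos\eta_i,\ e^{\mathbf{i}2\pi k/n_i}\sin\eta_i)\in\mathbb{C}^2\cong\mathbb{R}^4$, $0\le j<m_i$, $0\le k<n_i$, where $m_i=m(d,\eta_i)$, $n_i=n(d,\eta_i)$; the tori $\eta=\pi/4-i\Delta\eta$, $i\ge1$, carry the points obtained by swapping the two complex coordinates. Thus $M(4,d)=m_0n_0+2\sum_{i=1}^{\lfloor t/2\rfloor}m_in_i$. *)

(* Defs.v *)
From Stdlib Require Import Reals Lra Lia ZArith Arith List.
From Coquelicot Require Import Coquelicot.
Open Scope R_scope.

(* floor of a real, as a natural number (all arguments used below are >= 0) *)
Definition floorN (x : R) : nat := Z.to_nat (Int_part x).

Definition m_fn (d eta : R) : nat :=
  if Rle_dec d (2 * cos eta) then floorN (PI / asin (d / (2 * cos eta))) else 1%nat.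

(* n_1(d, eta), with m = m(d, eta); csc^2 = 1/sin^2, cot^2 = cos^2/sin^2 *)
Definition n1_fn (d eta : R) : nat :=
  floorN (PI / asin (sqrt ((d ^ 2 / 4) / (sin eta) ^ 2
            - ((cos eta) ^ 2 / (sin eta) ^ 2) * (sin (PI / (2 * INR (m_fn d eta)))) ^ 2))).

Definition n2_fn (d eta : R) : nat :=
  if Rle_dec d (2 * sin eta) then floorN (2 * PI / asin (d / (2 * sin eta))) else 1%nat.

Definition n_fn (d eta : R) : nat :=
  Nat.max (2 * (Nat.min (n1_fn d eta) (n2_fn d eta) / 2)) 1.

Definition delta_eta (d : R) : R := 2 * asin (d / 2).
Definition t_fn (d : R) : nat := floorN (PI / (4 * asin (d / 2))).
Definition eta_i (d : R) (i : nat) : R := PI / 4 + INR i * delta_eta d.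

(* number of points on the torus T_{eta_i} *)
Definition pts (d : R) (i : nat) : nat := (m_fn d (eta_i d i) * n_fn d (eta_i d i))%nat.

Definition M4 (d : R) : nat :=
  (pts d 0 + 2 * fold_right Nat.add 0%nat (map (pts d) (seq 1 (t_fn d / 2))))%nat.

(* surface area of S^3 in R^4 *)
Definition S4 : R := 2 * PI ^ 2.

(* Main.v *)
Require Import Defs.
From Stdlib Require Import Reals.
From Coquelicot Require Import Coquelicot.
From Stdlib Require Import Lra Lia ZArith Arith List.
Open Scope R_scope.

Ltac fixfact := rewrite !INR_IZR_INZ;
 repeat match goal with |- context [Z.of_nat (Factorial.fact ?n)] =>
   let v := eval vm_compute in (Z.of_nat (Factorial.fact n)) in
   replace (Z.of_nat (Factorial.fact n)) with v by (vm_compute; reflexivity) end.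
Lemma sin_lb_eq a : sin_lb a = a - a^3/6 + a^5/120 - a^7/5040.
Proof. unfold sin_lb, sin_approx, sin_term. cbn [sum_f_R0]. fixfact. simpl. field. Qed.
Lemma sin_ub_eq a : sin_ub a = a - a^3/6 + a^5/120 - a^7/5040 + a^9/362880.
Proof. unfold sin_ub, sin_approx, sin_term. cbn [sum_f_R0]. fixfact. simpl. field. Qed.
Lemma cos_lb_eq a : cos_lb a = 1 - a^2/2 + a^4/24 - a^6/720.
Proof. unfold cos_lb, cos_approx, cos_term. cbn [sum_f_R0]. fixfact. simpl. field. Qed.

Lemma sin_lb_poly a : 0 <= a -> a <= 2 -> a - a^3/6 <= sin a.
Proof. intros H1 H2. assert (a <= PI) by (pose proof PI2_3_2; lra).
  destruct (SIN a H1 H) as [H3 _]. rewrite sin_lb_eq in H3.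
  assert (0 <= a^5/120 - a^7/5040). { assert (a^7 = a^5 * a^2) by ring.
   assert (0 <= a^5) by (apply pow_le; lra). assert (a^2 <= 4) by nra. nra. }
  lra. Qed.
Lemma sin_le_id a : 0 <= a -> a <= 2 -> sin a <= a.
Proof. intros H1 H2. assert (a <= PI) by (pose proof PI2_3_2; lra).
  destruct (SIN a H1 H) as [_ H3]. rewrite sin_ub_eq in H3.
  assert (a^3 = a*a^2) by ring. assert (a^5 = a*a^2*a^2) by ring.
  assert (a^7 = a*a^2*a^2*a^2) by ring. assert (a^9 = a*a^2*a^2*a^2*a^2) by ring.
  assert (0 <= a^2 <= 4) by nra.
  set (b := a^2) in *.
  assert (0 <= - b/6 + b*b/120 - b*b*b/5040 + b*b*b*b/362880 -> False \/ True) by tauto.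
  assert (- b/6 + b*b/120 - b*b*b/5040 + b*b*b*b/362880 <= 0).
  { assert (b*b <= 4*b) by nra. assert (b*b*b*b <= 64*b) by nra. assert (0<= b*b*b) by nra. nra. }
  nra. Qed.
Lemma cos_lb_poly a : - PI / 2 <= a -> a <= PI/2 -> 1 - a^2/2 <= cos a.
Proof. intros H1 H2. destruct (COS a H1 H2) as [H _]. rewrite cos_lb_eq in H.
  assert (Hp : PI <= 4) by (pose proof PI_4; lra).
  assert (0 <= a^2 <= 4) by nra. assert (a^4 = a^2*a^2) by ring. assert (a^6 = a^2*a^2*a^2) by ring.
  set (b := a^2) in *. assert (0 <= b*b/24 - b*b*b/720) by nra. lra. Qed.

Lemma asin_bounds x : 0 < x -> x <= 1/2 -> 0 < asin x /\ x <= asin x /\ asin x <= x * (1 + x^2).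
Proof. intros H1 H2.
  assert (Hb := asin_bound x). assert (Hs := sin_asin x ltac:(lra)).
  set (a := asin x) in *. pose proof PI2_3_2. pose proof PI_4.
  assert (Ha : 0 < a).
  { destruct (Rle_or_lt a 0) as [Hn|Hn]; [|exact Hn].
    assert (sin a <= sin 0) by (apply sin_incr_1; lra). rewrite sin_0 in H3. lra. }
  assert (x <= a) by (rewrite <- Hs; apply sin_le_id; lra).
  assert (a - a^3/6 <= x) by (rewrite <- Hs; apply sin_lb_poly; lra).
  split; [lra|split; [lra|]].
  assert (a <= 2) by lra.
  assert (a*(1 - a^2/6) <= x) by (simpl in *; nra).
  assert (a^2 <= 4) by nra.
  assert (a <= 3*x) by (simpl in *; nra).
  assert (a <= 3/2) by lra.
  assert (a*(1 - (9/4)/6) <= x) by (simpl in *; nra).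
  assert (a <= 16/10*x) by lra.
  assert (a^2 <= 256/100*x^2) by (simpl in *; nra).
  assert (a*(1 - 256/100*x^2/6) <= x) by (simpl in *; nra).
  assert (x^2 <= 1/4) by (simpl; nra).
  assert (x*(1 + x^2)*(1 - 256/100*x^2/6) >= x).
  { assert (E: x*(1 + x^2)*(1 - 256/100*x^2/6) - x = x^3*((1 - 256/600) - 256/600*x^2)) by field.
    assert (0 <= x^3) by (apply pow_le; lra).
    assert (0 <= (1 - 256/600) - 256/600*x^2) by lra.
    assert (0 <= x^3*((1 - 256/600) - 256/600*x^2)) by (apply Rmult_le_pos; lra). lra. }
  assert (Hk: 0 < 1 - 256/100*x^2/6) by lra.
  apply (Rmult_le_reg_r _ _ _ Hk). lra.
Qed.

Lemma floorN_bounds y : 0 <= y -> INR (floorN y) <= y /\ y - 1 < INR (floorN y).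
Proof. intros Hy. unfold floorN. destruct (base_Int_part y) as [H1 H2].
  assert (0 <= Int_part y)%Z.
  { assert (IZR (-1) < IZR (Int_part y)) by lra.
    apply lt_IZR in H. lia. }
  rewrite INR_IZR_INZ, Z2Nat.id by exact H. lra. Qed.

Lemma n_nat_up k : (Nat.max (2 * (k / 2)) 1 <= Nat.max k 1)%nat.
Proof. pose proof (Nat.Div0.mul_div_le k 2). lia. Qed.
Lemma n_nat_lo k : (k <= Nat.max (2 * (k / 2)) 1 + 1)%nat.
Proof. pose proof (Nat.div_mod k 2). pose proof (Nat.mod_upper_bound k 2). lia. Qed.

Lemma n_upper d e U : 1 <= U -> (INR (n1_fn d e) <= U \/ INR (n2_fn d e) <= U) -> INR (n_fn d e) <= U.
Proof. intros HU H. unfold n_fn.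
  set (k := Nat.min (n1_fn d e) (n2_fn d e)).
  assert (INR k <= U).
  { destruct H as [H|H]; eapply Rle_trans; [|exact H| |exact H]; apply le_INR; unfold k; lia. }
  eapply Rle_trans. apply le_INR, n_nat_up.
  destruct (Nat.le_ge_cases k 1).
  - rewrite Nat.max_r by lia. simpl. lra.
  - rewrite Nat.max_l by lia. lra.
Qed.

Lemma n_lower d e V : V <= INR (n1_fn d e) -> V <= INR (n2_fn d e) -> V - 1 <= INR (n_fn d e).
Proof. intros H1 H2. unfold n_fn.
  set (k := Nat.min (n1_fn d e) (n2_fn d e)).
  assert (V <= INR k).
  { unfold k. destruct (Nat.le_ge_cases (n1_fn d e) (n2_fn d e)).
    - rewrite Nat.min_l by lia. lra.
    - rewrite Nat.min_r by lia. lra. }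
  pose proof (le_INR _ _ (n_nat_lo k)). rewrite plus_INR in H0. change (INR 1) with 1 in H0. lra.
Qed.

Lemma le_div a b c : 0 < b -> a <= c * b -> a / b <= c.
Proof. intros Hb H. apply (Rmult_le_reg_r b); [lra|]. unfold Rdiv. rewrite Rmult_assoc, Rinv_l; lra. Qed.
Lemma div_ge a b c : 0 < b -> c * b <= a -> c <= a / b.
Proof. intros Hb H. apply (Rmult_le_reg_r b); [lra|]. unfold Rdiv. rewrite Rmult_assoc, Rinv_l; lra. Qed.
Lemma div_pos' a b : 0 <= a -> 0 < b -> 0 <= a / b.
Proof. intros. unfold Rdiv. apply Rmult_le_pos; [lra|]. apply Rlt_le, Rinv_0_lt_compat; lra. Qed.

Lemma asin_ge x : 0 < x -> x <= 1 -> 0 < asin x /\ x <= asin x.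
Proof. intros H1 H2.
  assert (Hb := asin_bound x). assert (Hs := sin_asin x ltac:(lra)).
  set (a := asin x) in *. pose proof PI2_3_2. pose proof PI_4.
  assert (Ha : 0 < a).
  { destruct (Rle_or_lt a 0) as [Hn|Hn]; [|exact Hn].
    assert (sin a <= sin 0) by (apply sin_incr_1; lra). rewrite sin_0 in H3. lra. }
  split; [lra|]. rewrite <- Hs at 1; apply sin_le_id; lra. Qed.

Lemma floor_asin_up p d k : 0 < p -> 0 < d -> d <= k ->
  INR (floorN (p / asin (d / k))) <= p * k / d.
Proof. intros Hp Hd Hk.
  assert (Hx : 0 < d / k) by (apply Rdiv_lt_0_compat; lra).
  assert (Hx1 : d / k <= 1) by (apply le_div; lra).
  destruct (asin_ge _ Hx Hx1) as [Ha1 Ha2].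
  destruct (floorN_bounds (p / asin (d / k))) as [H _]. { apply div_pos'; lra. }
  eapply Rle_trans; [exact H|]. apply le_div; [lra|].
  replace (p * k / d * asin (d / k)) with (p * (asin (d/k) / (d/k))) by (field; lra).
  rewrite <- (Rmult_1_r p) at 1. apply Rmult_le_compat_l; [lra|]. apply div_ge; lra. Qed.

Lemma m_upper d e : 0 < d -> 0 <= cos e -> INR (m_fn d e) <= 2 * PI * cos e / d + 1.
Proof. intros Hd Hc. pose proof PI2_3_2. unfold m_fn. destruct (Rle_dec d (2 * cos e)).
  - assert (INR (floorN (PI / asin (d / (2 * cos e)))) <= PI * (2 * cos e) / d)
      by (apply floor_asin_up; lra).
    replace (2 * PI * cos e / d) with (PI * (2 * cos e) / d) by (field; lra). lra.
  - simpl. assert (0 <= 2 * PI * cos e / d) by (apply div_pos'; nra). lra. Qed.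

Lemma n2_upper d e : 0 < d -> d <= 1/100 -> 1/2 <= sin e ^ 2 -> 0 < sin e ->
  INR (n2_fn d e) <= 4 * PI / d.
Proof. intros Hd Hd1 Hs Hs0. pose proof PI2_3_2. pose proof (SIN_bound e). unfold n2_fn. destruct (Rle_dec d (2 * sin e)).
  - assert (INR (floorN (2 * PI / asin (d / (2 * sin e)))) <= 2 * PI * (2 * sin e) / d)
      by (apply floor_asin_up; lra).
    eapply Rle_trans; [exact H1|]. apply le_div; [lra|].
    replace (4 * PI / d * d) with (4 * PI) by (field; lra). nra.
  - exfalso. simpl in Hs. nra. Qed.

Lemma eta_facts e : PI/4 <= e <= PI/2 ->
  0 <= cos e /\ 0 < sin e /\ cos e <= sin e /\ sin e ^ 2 + cos e ^ 2 = 1.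
Proof. intros [H1 H2]. pose proof PI2_3_2.
  split; [apply cos_ge_0; lra|]. split; [apply sin_gt_0; lra|].
  split; [|pose proof (sin2_cos2 e); unfold Rsqr in *; simpl; lra].
  assert (0 <= sin (e - PI/4)) by (apply sin_ge_0; lra).
  rewrite sin_minus, sin_PI4, cos_PI4 in H0.
  assert (0 < sqrt 2) by (apply sqrt_lt_R0; lra).
  assert (0 < 1 / sqrt 2) by (apply Rdiv_lt_0_compat; lra). nra. Qed.

Definition Acst : R := 8 * PI ^ 2 / sqrt 3.

Lemma sqrt3_facts : sqrt 3 * sqrt 3 = 3 /\ 17/10 < sqrt 3 < 18/10.
Proof. assert (H := sqrt_sqrt 3 ltac:(lra)). pose proof (sqrt_pos 3). split; [exact H|]. split; nra. Qed.

Lemma Acst_bounds : 0 < Acst <= 100.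
Proof. unfold Acst. destruct sqrt3_facts as [_ [H1 H2]]. pose proof PI2_3_2. pose proof PI_4.
  split. apply Rdiv_lt_0_compat; [simpl; nra | lra].
  apply le_div; [lra|]. simpl; nra. Qed.

Lemma case1 d e : 0 < d -> d <= 1/100 -> PI/4 <= e <= PI/2 -> cos e <= 4 * d ->
  Rabs (INR (m_fn d e * n_fn d e) * d ^ 2 - Acst * sin e * cos e) <= 1000 * d.
Proof. intros Hd Hd1 He Hc.
  destruct (eta_facts e He) as [Hc0 [Hs0 [Hcs Hsc]]].
  assert (Hs2 : 1/2 <= sin e ^ 2) by (simpl in *; nra).
  pose proof PI2_3_2. pose proof PI_4. pose proof Acst_bounds.
  assert (Hm := m_upper d e Hd Hc0).
  assert (Hm' : INR (m_fn d e) <= 33).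
  { eapply Rle_trans; [exact Hm|]. assert (2 * PI * cos e / d <= 32); [|lra].
    apply le_div; [lra|]. nra. }
  assert (Hn : INR (n_fn d e) <= 4 * PI / d + 1).
  { apply n_upper. assert (0 <= 4 * PI / d) by (apply div_pos'; lra). lra.
    right. pose proof (n2_upper d e Hd Hd1 Hs2 Hs0). lra. }
  assert (Hn' : INR (n_fn d e) * d ^ 2 <= 17 * d).
  { assert (0 <= d^2) by (simpl; nra).
    eapply Rle_trans. apply Rmult_le_compat_r; [exact H2| exact Hn].
    replace ((4 * PI / d + 1) * d ^ 2) with (4 * PI * d + d * d) by (simpl; field; lra). nra. }
  rewrite mult_INR.
  pose proof (pos_INR (m_fn d e)). pose proof (pos_INR (n_fn d e)).
  assert (0 <= INR (m_fn d e) * INR (n_fn d e) * d ^ 2 <= 33 * (17 * d)).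
  { split. apply Rmult_le_pos; [nra|simpl; nra].
    rewrite Rmult_assoc. apply Rmult_le_compat; try lra. apply Rmult_le_pos; [lra|simpl; nra]. }
  assert (0 <= Acst * sin e * cos e <= 400 * d).
  { split. apply Rmult_le_pos; nra.
    assert (sin e <= 1) by nra. 
    assert (Acst * sin e <= 100) by nra.
    assert (0 <= Acst * sin e) by nra. nra. }
  apply Rabs_le. lra. Qed.

Lemma case2 d e : 0 < d -> d <= 1/100 -> PI/4 <= e <= PI/2 -> 4 * d < cos e ->
  Rabs (INR (m_fn d e * n_fn d e) * d ^ 2 - Acst * sin e * cos e) <= 1000 * d.
Proof. intros Hd Hd1 He Hc.
  destruct (eta_facts e He) as [Hc0 [Hs0 [Hcs Hsc]]].
  assert (Hs2 : 1/2 <= sin e ^ 2) by (simpl in *; nra).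
  pose proof PI2_3_2 as Hpi3. pose proof PI_4 as Hpi4. pose proof Acst_bounds as HA.
  destruct sqrt3_facts as [Hr2 Hr].
  set (c := cos e) in *. set (s := sin e) in *. set (r := sqrt 3) in *.
  assert (Hs1 : s <= 1) by (simpl in *; nra).
  set (x := d / (2 * c)).
  assert (Hx : x * (2 * c) = d) by (unfold x; field; lra).
  assert (Hx0 : 0 < x) by (unfold x; apply Rdiv_lt_0_compat; lra).
  assert (Hx1 : x < 1/8) by nra.
  assert (Hmeq : m_fn d e = floorN (PI / asin x)).
  { unfold m_fn. fold c. destruct (Rle_dec d (2 * c)); [reflexivity|lra]. }
  destruct (asin_bounds x Hx0 ltac:(lra)) as [Ha0 [Ha1 Ha2]].
  set (a := asin x) in *.
  destruct (floorN_bounds (PI / a)) as [HM1 HM2]. { apply div_pos'; lra. }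
  rewrite <- Hmeq in HM1, HM2.
  set (M := INR (m_fn d e)) in *.
  assert (HMa1 : M * a <= PI).
  { replace PI with (PI / a * a) by (field; lra). apply Rmult_le_compat_r; lra. }
  assert (HMa2 : PI - a < M * a).
  { replace (PI - a) with ((PI / a - 1) * a) by (field; lra). apply Rmult_lt_compat_r; lra. }
  assert (Hx2 : 0 <= x^2 <= 1/64) by (simpl; nra).
  assert (Ha3 : a <= 2 * x) by nra.
  assert (HM11 : 11 <= M) by nra.
  set (th := PI / (2 * M)).
  assert (Hth : th * (2 * M) = PI) by (unfold th; field; lra).
  assert (Hth0 : 0 < th) by (unfold th; apply Rdiv_lt_0_compat; lra).
  assert (Hth1 : th <= 1/5) by nra.
  set (sn := sin th).
  assert (Hsn1 : sn <= th) by (apply sin_le_id; lra).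
  assert (Hsn2 : th - th^3/6 <= sn) by (apply sin_lb_poly; lra).
  assert (Hcth1 : c * th * (PI - a) <= PI * d * (1 + x^2) / 4).
  { assert (th * (PI - a) <= th * (M * a)) by (apply Rmult_le_compat_l; lra).
    assert (th * (M * a) = PI * a / 2) by (rewrite <- Hth; field; lra).
    assert (c * a <= d / 2 * (1 + x^2)) by nra.
    nra. }
  assert (Hcth : c * th <= d / 4 * (1 + 2 * x)).
  { assert (PI * (1 + x^2) <= (1 + 2 * x) * (PI - a)) by (simpl in *; nra).
    assert (0 < PI - a) by lra.
    assert (c * th * (PI - a) <= d / 4 * (1 + 2 * x) * (PI - a)) by nra.
    nra. }
  assert (Hth2 : a / 2 <= th) by nra.
  assert (Hsn3 : x/2 - (x/2)^3/6 <= sn).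
  { assert (th - th^3/6 - (x/2 - (x/2)^3/6) = (th - x/2) * (1 - (th^2 + th*(x/2) + (x/2)^2)/6)) by (simpl; field).
    assert (0 <= (th - x/2) * (1 - (th^2 + th*(x/2) + (x/2)^2)/6)).
    { apply Rmult_le_pos. lra. clear - Hth0 Hth1 Hx0 Hx1. simpl; nra. }
    lra. }
  assert (Hcsn1 : 0 <= c * sn).
  { apply Rmult_le_pos; [lra|]. clear - Hsn2 Hth0 Hth1. simpl in *; nra. }
  assert (Hcsn2 : c * sn <= d / 4 * (1 + 2 * x)) by (clear - Hcth Hsn1 Hc0; nra).
  assert (Hcsn3 : d / 4 * (1 - x^2/24) <= c * sn).
  { assert (c * (x/2 - (x/2)^3/6) = d/4 * (1 - x^2/24)) by (rewrite <- Hx; simpl; field).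
    clear - H Hsn3 Hc0. nra. }
  assert (Hcs2a : (c * sn)^2 <= d^2 * (1 + 5 * x) / 16).
  { assert ((c*sn)^2 <= (d / 4 * (1 + 2 * x))^2) by (apply pow_incr; lra).
    clear - H Hx0 Hx1 Hd. simpl in *; nra. }
  assert (Hcs2b : d^2 * (1 - x^2/12) / 16 <= (c * sn)^2).
  { assert ((d / 4 * (1 - x^2/24))^2 <= (c*sn)^2).
    { apply pow_incr; split; [|lra]. clear - Hd Hx2. simpl in *; nra. }
    clear - H Hx2 Hd. simpl in *; nra. }
  set (q := (d ^ 2 / 4) / s ^ 2 - (c ^ 2 / s ^ 2) * sn ^ 2).
  assert (Hs0' : 0 < s^2) by (clear - Hs0; simpl; nra).
  assert (Hq : q * s^2 = d^2/4 - (c*sn)^2) by (unfold q; field; lra).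
  assert (Hq1 : d^2 * (3 - 5*x) / 16 <= q * s^2) by lra.
  assert (Hq2 : q * s^2 <= d^2 * (3 + x^2/12) / 16) by lra.
  assert (Hd2 : 0 < d^2) by (clear - Hd; simpl; nra).
  assert (Hq0 : 0 < q).
  { assert (0 < q * s^2) by (clear - Hq1 Hd2 Hx1; nra). clear - H Hs0'. nra. }
  set (y := sqrt q).
  assert (Hy2 : y * y = q) by (apply sqrt_sqrt; lra).
  assert (Hy0 : 0 < y) by (apply sqrt_lt_R0; lra).
  assert (Hyd : y <= d).
  { assert (q <= d^2).
    { assert (q * s^2 <= d^2 * s^2) by (clear - Hq2 Hs2 Hd2 Hx2; nra). clear - H Hs0'. nra. }
    clear - H Hy2 Hy0 Hd. simpl in *; nra. }
  assert (Hn1 : n1_fn d e = floorN (PI / asin y)) by reflexivity.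
  set (z := d / (2 * s)).
  assert (Hz : z * (2 * s) = d) by (unfold z; field; lra).
  assert (Hz0 : 0 < z) by (unfold z; apply Rdiv_lt_0_compat; lra).
  assert (Hzd : z <= d) by (clear - Hz Hz0 Hs2 Hs0 Hd; nra).
  assert (Hn2 : n2_fn d e = floorN (2 * PI / asin z)).
  { unfold n2_fn. fold s. destruct (Rle_dec d (2 * s)); [reflexivity|lra]. }
  destruct (asin_bounds y Hy0 ltac:(lra)) as [Hay0 [Hay1 Hay2]].
  destruct (asin_bounds z Hz0 ltac:(lra)) as [Haz0 [Haz1 Haz2]].
  destruct (floorN_bounds (PI / asin y)) as [HN1a HN1b]. { apply div_pos'; lra. }
  destruct (floorN_bounds (2 * PI / asin z)) as [HN2a HN2b]. { apply div_pos'; lra. }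
  rewrite <- Hn1 in HN1a, HN1b. rewrite <- Hn2 in HN2a, HN2b.
  set (N := INR (n_fn d e)).
  pose proof (pos_INR (n_fn d e)) as HN0. fold N in HN0.
  assert (HNy : N * y <= PI).
  { assert (HU : N <= PI / y).
    { apply n_upper. apply div_ge; [lra|]. clear - Hyd Hd1 Hpi3; lra.
      left. eapply Rle_trans; [exact HN1a|]. unfold Rdiv. apply Rmult_le_compat_l; [lra|].
      apply Rinv_le_contravar; lra. }
    replace PI with (PI / y * y) by (field; lra). apply Rmult_le_compat_r; lra. }
  assert (HMd : M * d <= 2 * PI * c).
  { rewrite <- Hx. assert (M * x <= PI) by (clear - HMa1 Ha1 Hx0 HM11; nra). clear - H Hc0. nra. }
  set (v := 4 * s * y / d).
  assert (Hv : v * d = 4 * s * y) by (unfold v; field; lra).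
  assert (Hv2 : 3 - 5 * x <= v * v).
  { assert (v * v * d^2 = 16 * (q * s^2)) by (rewrite <- Hy2; unfold v; field; lra).
    assert ((3 - 5 * x) * d^2 <= v * v * d^2) by lra.
    clear - H0 Hd2. nra. }
  assert (Hv0 : 0 < v) by (unfold v; apply Rdiv_lt_0_compat; [clear - Hs0 Hy0; nra|lra]).
  assert (Hv1 : 3/2 <= v) by (clear - Hv2 Hv0 Hx1; nra).
  assert (HPup : M * N * d^2 * v <= 8 * PI^2 * s * c).
  { assert (E: M*N*d^2*v = M*N*d*(v*d)) by (simpl; ring). rewrite E, Hv.
    replace (M * N * d * (4 * s * y)) with (4 * s * (M * d) * (N * y)) by ring.
    assert (0 <= M * d) by (clear - HM11 Hd; nra).
    assert (4 * s * (M * d) * (N * y) <= 4 * s * (2 * PI * c) * (N * y)).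
    { apply Rmult_le_compat_r. clear - HN0 Hy0; nra. apply Rmult_le_compat_l; [lra|exact HMd]. }
    assert (4 * s * (2 * PI * c) * (N * y) <= 4 * s * (2 * PI * c) * PI).
    { apply Rmult_le_compat_l; [|exact HNy]. apply Rmult_le_pos; apply Rmult_le_pos; try lra. }
    simpl. lra. }
  assert (Hinv : r <= v + x * v * r).
  { clear - Hv2 Hv1 Hr Hr2 Hx0 Hx1.
    assert (0 <= x * v * r) by (apply Rmult_le_pos; [apply Rmult_le_pos|]; lra).
    destruct (Rle_or_lt r v). lra.
    assert ((r - v) * (r + v) <= 5 * x) by nra.
    assert ((r - v) * 3 <= 5 * x) by nra.
    assert (v * r >= (3/2) * (17/10)) by nra.
    assert (x * (v * r) >= x * ((3/2) * (17/10))) by (apply Rmult_ge_compat_l; lra).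
    assert (x * v * r = x * (v * r)) by ring. lra. }
  set (K := 8 * PI ^ 2 * s * c).
  assert (HK0 : 0 <= K).
  { unfold K. assert (0 <= PI^2) by (apply pow_le; lra).
    apply Rmult_le_pos; [apply Rmult_le_pos; [apply Rmult_le_pos|]|]; lra. }
  assert (HAK : Acst * s * c = K / r) by (unfold Acst, K; fold r; field; lra).
  assert (HUP : M * N * d^2 - Acst * s * c <= 100 * d).
  { rewrite HAK.
    assert (M * N * d^2 <= K / v) by (apply div_ge; [lra|]; unfold K; lra).
    assert (K / v - K / r <= K * x).
    { assert (Hiv : 1 / v <= 1 / r + x).
      { apply le_div; [lra|].
        replace ((1 / r + x) * v) with ((v + x * v * r) / r) by (field; lra).
        apply div_ge; lra. }
      assert (K * (1 / v) <= K * (1 / r + x)) by (apply Rmult_le_compat_l; lra).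
      replace (K / v) with (K * (1 / v)) by (field; lra).
      replace (K / r) with (K * (1 / r)) by (field; lra). lra. }
    assert (K * x = 4 * PI^2 * s * d) by (unfold K; rewrite <- Hx; simpl; ring).
    assert (4 * PI^2 * s * d <= 100 * d).
    { clear - Hs1 Hs0 Hd Hpi4 Hpi3. assert (PI^2 <= 16) by (simpl; nra).
      assert (PI^2 * s <= 16) by nra. assert (0 <= PI^2) by (apply pow_le; lra). nra. }
    lra. }
  set (W := r + x^2/12).
  assert (HW : r <= W <= r + 1/100) by (unfold W; lra).
  assert (Hsy : 4 * s * y <= d * W).
  { assert ((4 * s * y)^2 <= (d * W)^2).
    { replace ((4 * s * y)^2) with (16 * (q * s^2)) by (rewrite <- Hy2; simpl; ring).
      assert (3 + x^2/12 <= W^2) by (unfold W; clear - Hr Hr2 Hx2; simpl in *; nra).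
      assert (d^2 * (3 + x^2/12) <= d^2 * W^2) by (apply Rmult_le_compat_l; lra).
      replace ((d*W)^2) with (d^2 * W^2) by ring. lra. }
    assert (0 <= d * W) by (clear - Hd HW Hr; nra).
    clear - H H0. simpl in *; nra. }
  assert (Hyd2 : y^2 <= d^2) by (clear - Hyd Hy0; simpl; nra).
  assert (Hzd2 : z^2 <= d^2) by (clear - Hzd Hz0; simpl; nra).
  assert (Hay3 : asin y <= y * (1 + d^2)).
  { assert (y * y^2 <= y * d^2) by (apply Rmult_le_compat_l; lra). nra. }
  assert (Haz3 : asin z <= z * (1 + d^2)).
  { assert (z * z^2 <= z * d^2) by (apply Rmult_le_compat_l; lra). nra. }
  set (D1 := d * W * (1 + d^2)).
  assert (HD1 : 0 < D1) by (unfold D1; clear - Hd Hd2 HW Hr; apply Rmult_lt_0_compat; nra).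
  set (B := 4 * PI * s / D1).
  assert (HB : B * D1 = 4 * PI * s) by (unfold B; field; lra).
  assert (HB0 : 0 < B) by (unfold B; apply Rdiv_lt_0_compat; [nra|lra]).
  assert (HBy : B * asin y <= PI).
  { assert (B * asin y <= B * (y * (1 + d^2))) by (apply Rmult_le_compat_l; lra).
    assert (B * (y * (1 + d^2)) * (d * W) <= PI * (d * W)).
    { replace (B * (y * (1 + d^2)) * (d * W)) with ((B * D1) * y) by (unfold D1; ring).
      rewrite HB. clear - Hsy Hpi3. nra. }
    assert (0 < d * W) by (clear - Hd HW Hr; nra).
    assert (B * (y * (1 + d^2)) <= PI) by (clear - H0 H1; nra). lra. }
  assert (HBz : B * asin z <= 2 * PI).
  { assert (B * asin z <= B * (z * (1 + d^2))) by (apply Rmult_le_compat_l; lra).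
    assert (B * (z * (1 + d^2)) * (d * W) <= 2 * PI * (d * W)).
    { replace (B * (z * (1 + d^2)) * (d * W)) with ((B * D1) * z) by (unfold D1; ring).
      rewrite HB. replace (4 * PI * s * z) with (2 * PI * (z * (2 * s))) by ring. rewrite Hz.
      assert (1 <= W) by lra. assert (0 <= 2*PI*d) by (apply Rmult_le_pos; [apply Rmult_le_pos|]; lra).
      assert (0 <= (2*PI*d)*(W-1)) by (apply Rmult_le_pos; lra). lra. }
    assert (0 < d * W) by (clear - Hd HW Hr; nra).
    assert (B * (z * (1 + d^2)) <= 2 * PI) by (clear - H0 H1; nra). lra. }
  assert (HNlo : B - 2 <= N).
  { replace (B - 2) with ((B - 1) - 1) by ring. apply (n_lower d e (B - 1)).
    - assert (B <= PI / asin y) by (apply div_ge; lra). lra.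
    - assert (B <= 2 * PI / asin z) by (apply div_ge; lra). lra. }
  set (u := PI / (x * (1 + x^2))).
  assert (Hx3 : 0 < x * (1 + x^2)) by (clear - Hx0; simpl; nra).
  assert (Hu : u * (x * (1 + x^2)) = PI) by (unfold u; field; lra).
  assert (HMlo : u - 1 <= M).
  { assert (u <= PI / a).
    { apply div_ge; [lra|]. assert (u * a <= u * (x * (1 + x^2))).
      apply Rmult_le_compat_l; [|lra]. unfold u; apply div_pos'; lra. lra. }
    lra. }
  assert (Hud : (u * d) * (1 + x^2) = 2 * PI * c).
  { rewrite <- Hx. replace (u * (x * (2 * c)) * (1 + x ^ 2)) with ((u * (x * (1 + x^2))) * (2 * c)) by ring.
    rewrite Hu. ring. }
  assert (HBd : (B * d) * (W * (1 + d^2)) = 4 * PI * s) by (rewrite <- HB; unfold D1; ring).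
  assert (Hs12 : 1/2 <= s) by (clear - Hs2 Hs1 Hs0; simpl in *; nra).
  assert (Hu1 : 1 <= u).
  { assert (x * (1 + x^2) <= 1) by (clear - Hx0 Hx1 Hx2; simpl in *; nra). clear - Hu H Hx3 Hpi3. nra. }
  assert (HB2 : 2 <= B).
  { assert (D1 <= 1).
    { unfold D1. clear - Hd Hd1 HW Hr Hd2. assert (d^2 <= 1) by (simpl; nra).
      assert (d * W <= 1/50) by nra. assert (0 <= d * W) by nra. nra. }
    clear - HB H HD1 Hs12 Hpi3. nra. }
  assert (Hud1 : 0 <= u * d <= 2 * PI).
  { split. clear - Hu1 Hd; nra.
    assert (0 <= (u * d) * x^2) by (apply Rmult_le_pos; [clear - Hu1 Hd; nra|lra]).
    assert (u * d <= (u * d) * (1 + x^2)) by (replace ((u*d)*(1+x^2)) with (u*d + (u*d)*x^2) by ring; lra). assert (2*PI*c <= 2*PI) by (clear - Hcs Hs1 Hpi3; nra). lra. }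
  assert (HBd1 : 0 <= B * d <= 10).
  { split. clear - HB0 Hd; nra.
    assert (HW1 : 17/10 <= W * (1 + d^2)) by (clear - HW Hr Hd2; nra).
    assert ((B * d) * (17/10) <= (B * d) * (W * (1 + d^2))) by (apply Rmult_le_compat_l; [clear - HB0 Hd; nra|lra]).
    assert (PI * s <= 4) by (clear - Hs1 Hs0 Hpi4 Hpi3; nra). clear - H HBd Hs1 Hpi4 H0. lra. }
  assert (HPlo1 : (u - 1) * (B - 2) * d^2 <= M * N * d^2).
  { apply Rmult_le_compat_r; [lra|]. apply Rmult_le_compat; lra. }
  set (p := (u * d) * (B * d)).
  assert (HPlo2 : p - 4 * PI * d - 10 * d <= (u - 1) * (B - 2) * d^2).
  { replace ((u - 1) * (B - 2) * d^2) with (p - 2 * (u * d) * d - (B * d) * d + 2 * d^2) by (unfold p; simpl; ring).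
    assert ((u * d) * d <= 2 * PI * d) by (apply Rmult_le_compat_r; lra).
    assert ((B * d) * d <= 10 * d) by (apply Rmult_le_compat_r; lra). lra. }
  set (D := (1 + x^2) * (W * (1 + d^2))).
  assert (HpD : p * D = K).
  { unfold p, D, K. replace ((u * d * (B * d)) * ((1 + x^2) * (W * (1 + d^2)))) with
       (((u * d) * (1 + x^2)) * ((B * d) * (W * (1 + d^2)))) by ring.
    rewrite Hud, HBd. ring. }
  assert (HDr : 0 <= D - r <= 3 * x^2 + 3 * d^2).
  { unfold D, W. set (X := x^2) in *. set (Y := d^2) in *.
    assert (0 <= X * Y) by (apply Rmult_le_pos; lra).
    replace ((1 + X) * ((r + X / 12) * (1 + Y)) - r) with (r * (X + Y + X * Y) + (X/12) * (1 + X) * (1 + Y)) by ring.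
    assert (0 <= r * (X + Y + X * Y) <= 18/10 * (X + Y + X * Y)) by (split; apply Rmult_le_compat_r || apply Rmult_le_pos; lra).
    assert (HY : 0 <= Y <= 1/10000) by (unfold Y; clear - Hd1 Hd; simpl; split; nra).
    assert (X * Y <= X * (1/10000)) by (apply Rmult_le_compat_l; lra).
    assert (0 <= (X/12) * (1 + X) * (1 + Y) <= (X/12) * 2).
    { assert (0 <= (1 + X) * (1 + Y) <= 2) by (clear - HY Hx2; split; nra).
      replace ((X/12) * (1 + X) * (1 + Y)) with ((X/12) * ((1 + X) * (1 + Y))) by ring.
      split; [apply Rmult_le_pos|apply Rmult_le_compat_l]; lra. }
    lra. }
  assert (Hp0 : 0 <= p) by (unfold p; apply Rmult_le_pos; lra).
  assert (HLO : K / r - p <= 10 * d).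
  { assert (Hpr : p * r <= K) by (rewrite <- HpD; apply Rmult_le_compat_l; lra).
    assert (E: (K / r - p) * r = p * (D - r)) by (rewrite <- HpD; field; lra).
    assert ((K / r - p) * 3 <= K * (D - r)).
    { rewrite <- Hr2. replace ((K / r - p) * (r * r)) with ((K / r - p) * r * r) by ring. rewrite E.
      replace (p * (D - r) * r) with ((p * r) * (D - r)) by ring. apply Rmult_le_compat_r; lra. }
    assert (K * (D - r) <= K * (3 * x^2 + 3 * d^2)) by (apply Rmult_le_compat_l; lra).
    assert (HKx2 : K * x^2 <= 8 * d).
    { assert (HKx : K * x = 4 * PI^2 * s * d) by (unfold K; rewrite <- Hx; simpl; ring).
      replace (K * x^2) with ((K * x) * x) by (simpl; ring).
      assert (H64 : 4 * PI^2 * s <= 64).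
      { clear - Hs1 Hs0 Hpi4 Hpi3. assert (PI^2 <= 16) by (simpl; nra). nra. }
      assert (HKx0 : 0 <= K * x) by (apply Rmult_le_pos; lra).
      assert (HKx1 : (K * x) * x <= (K * x) * (1/8)) by (apply Rmult_le_compat_l; lra).
      assert (K * x <= 64 * d) by (rewrite HKx; clear - H64 Hd; nra).
      lra. }
    assert (HKd2 : K * d^2 <= 2 * d).
    { assert (HK200 : K <= 200).
      { unfold K. clear - Hs1 Hs0 Hpi4 Hpi3 Hcs Hc0. assert (PI^2 <= 16) by (simpl; nra).
        assert (0 <= PI^2) by (apply pow_le; lra).
        assert (s * c <= 1) by nra. assert (0 <= s * c) by nra.
        replace (8 * PI^2 * s * c) with (8 * PI^2 * (s * c)) by ring. nra. }
      assert (HKd : K * d <= 2) by (clear - HK200 HK0 Hd Hd1; nra).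
      replace (K * d^2) with ((K * d) * d) by (simpl; ring). clear - HKd Hd HK0. nra. }
    lra. }
  assert (HUP' : INR (m_fn d e * n_fn d e) * d ^ 2 - Acst * s * c <= 100 * d).
  { rewrite mult_INR. fold M N. exact HUP. }
  assert (HLO' : - (1000 * d) <= INR (m_fn d e * n_fn d e) * d ^ 2 - Acst * s * c).
  { rewrite mult_INR. fold M N. rewrite HAK. assert (PI * d <= 4 * d) by (clear - Hpi4 Hd; nra). lra. }
  apply Rabs_le. lra.
Qed.

Definition Rsum (l : list nat) (f : nat -> R) : R := fold_right Rplus 0 (map f l).

Lemma INR_fold (g : nat -> nat) l :
  INR (fold_right Nat.add 0%nat (map g l)) = Rsum l (fun i => INR (g i)).
Proof. induction l as [|a l IH]; simpl; [reflexivity|]. rewrite plus_INR, IH. reflexivity. Qed.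

Lemma Rsum_mult_r l f k : Rsum l (fun i => f i * k) = Rsum l f * k.
Proof. induction l as [|a l IH]; unfold Rsum in *; simpl; [ring|]. rewrite IH. ring. Qed.

Lemma Rsum_err l f g e : (forall i, In i l -> Rabs (f i - g i) <= e) ->
  Rabs (Rsum l f - Rsum l g) <= INR (length l) * e.
Proof. induction l as [|a l IH]; intros H; unfold Rsum in *; cbn [map fold_right length].
  - rewrite Rminus_0_r, Rabs_R0. change (INR 0) with 0. lra.
  - replace (f a + fold_right Rplus 0 (map f l) - (g a + fold_right Rplus 0 (map g l)))
      with ((f a - g a) + (fold_right Rplus 0 (map f l) - fold_right Rplus 0 (map g l))) by ring.
    eapply Rle_trans; [apply Rabs_triang|].
    assert (Rabs (f a - g a) <= e) by (apply H; left; reflexivity).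
    assert (Rabs (fold_right Rplus 0 (map f l) - fold_right Rplus 0 (map g l)) <= INR (length l) * e)
      by (apply IH; intros; apply H; right; assumption).
    rewrite S_INR. lra. Qed.

Lemma telescope k D s n :
  2 * sin D * Rsum (seq s n) (fun i => k * cos (2 * INR i * D)) =
  k * (sin ((2 * INR (s + n) - 1) * D) - sin ((2 * INR s - 1) * D)).
Proof. revert s. induction n as [|n IH]; intros s; unfold Rsum in *; cbn [map fold_right seq].
  - rewrite Nat.add_0_r. ring.
  - rewrite Rmult_plus_distr_l, IH. replace (s + S n)%nat with (S s + n)%nat by lia.
    rewrite S_INR.
    replace ((2 * (INR s + 1) - 1) * D) with (2 * INR s * D + D) by ring.
    replace ((2 * INR s - 1) * D) with (2 * INR s * D - D) by ring.
    rewrite sin_plus, sin_minus. ring. Qed.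

Lemma pts_bound d i : 0 < d -> d <= 1/100 -> PI/4 <= eta_i d i <= PI/2 ->
  Rabs (INR (pts d i) * d ^ 2 - Acst / 2 * cos (2 * INR i * delta_eta d)) <= 1000 * d.
Proof. intros Hd Hd1 He.
  assert (E : Acst / 2 * cos (2 * INR i * delta_eta d) = Acst * sin (eta_i d i) * cos (eta_i d i)).
  { rewrite cos_sin. replace (PI / 2 + 2 * INR i * delta_eta d) with (2 * eta_i d i)
      by (unfold eta_i; field). rewrite sin_2a. field. }
  rewrite E. unfold pts.
  destruct (Rle_or_lt (cos (eta_i d i)) (4 * d)).
  - apply case1; assumption.
  - apply case2; assumption.
Qed.

Lemma main_bound d : 0 < d -> d <= 1/100 ->
  Rabs (INR (M4 d) / S4 * (d / 2) ^ 3 - 1 / (4 * sqrt 3)) <= 25 * d.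
Proof. intros Hd Hd1.
  pose proof PI2_3_2 as Hpi3. pose proof PI_4 as Hpi4. pose proof Acst_bounds as HA.
  destruct sqrt3_facts as [Hr2 Hr].
  destruct (asin_bounds (d/2) ltac:(lra) ltac:(lra)) as [Ha0 [Ha1 Ha2]].
  set (a := asin (d / 2)) in *.
  assert (Hd2 : (d/2)^2 <= 1/40000) by (clear - Hd Hd1; simpl; nra).
  assert (Ha3 : a <= d/2 * (1 + 1/40000)).
  { assert (d/2 * (1 + (d/2)^2) <= d/2 * (1 + 1/40000)) by (apply Rmult_le_compat_l; lra). lra. }
  set (Dl := delta_eta d).
  assert (HDl : Dl = 2 * a) by reflexivity.
  set (t := t_fn d).
  destruct (floorN_bounds (PI / (4 * a))) as [Ht1 Ht2]. { apply div_pos'; lra. }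
  assert (Ht : t = floorN (PI / (4 * a))) by reflexivity. rewrite <- Ht in Ht1, Ht2.
  assert (Ht1' : INR t * Dl <= PI / 2).
  { rewrite HDl. assert (INR t * (4 * a) <= PI).
    { assert (E1 : PI / (4 * a) * (4 * a) = PI) by (field; lra).
      assert (INR t * (4 * a) <= PI / (4 * a) * (4 * a)) by (apply Rmult_le_compat_r; lra). lra. } lra. }
  assert (Ht2' : PI / 2 - Dl < INR t * Dl).
  { rewrite HDl. assert ((PI / (4 * a) - 1) * (4 * a) < INR t * (4 * a)).
    { apply Rmult_lt_compat_r; lra. }
    replace ((PI / (4 * a) - 1) * (4 * a)) with (PI - 4 * a) in H by (field; lra). lra. }
  set (K := (t / 2)%nat).
  assert (HK : (2 * K <= t <= 2 * K + 1)%nat).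
  { unfold K. pose proof (Nat.div_mod t 2). pose proof (Nat.mod_upper_bound t 2). lia. }
  assert (HKr : 2 * INR K <= INR t <= 2 * INR K + 1).
  { destruct HK as [HK1 HK2]. apply le_INR in HK1. apply le_INR in HK2.
    rewrite mult_INR in HK1. rewrite plus_INR, mult_INR in HK2. simpl in HK1, HK2. lra. }
  assert (HDl0 : 0 < Dl) by lra.
  assert (Heta : forall i, (i <= K)%nat -> PI/4 <= eta_i d i <= PI/2).
  { intros i Hi. apply le_INR in Hi. pose proof (pos_INR i). unfold eta_i. fold Dl.
    assert (0 <= INR i * Dl) by (apply Rmult_le_pos; lra).
    assert (INR i * Dl <= INR K * Dl) by (apply Rmult_le_compat_r; lra).
    assert (2 * INR K * Dl <= INR t * Dl) by (apply Rmult_le_compat_r; lra). lra. }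
  set (l := seq 1 K).
  set (P0 := INR (pts d 0)).
  set (S := Rsum l (fun i => INR (pts d i))).
  set (g := fun i => Acst / 2 * cos (2 * INR i * Dl)).
  set (G := Rsum l g).
  assert (HM : INR (M4 d) = P0 + 2 * S).
  { unfold M4. rewrite plus_INR, mult_INR, INR_fold. reflexivity. }
  assert (HP0 : Rabs (P0 * d^2 - Acst / 2) <= 1000 * d).
  { pose proof (pts_bound d 0 Hd Hd1 (Heta 0%nat ltac:(lia))) as H0.
    replace (2 * INR 0 * delta_eta d) with 0 in H0 by (simpl; ring). rewrite cos_0, Rmult_1_r in H0.
    exact H0. }
  assert (HS : Rabs (S * d^2 - G) <= INR K * (1000 * d)).
  { unfold S. rewrite <- Rsum_mult_r. unfold l. rewrite <- (length_seq K 1) at 2.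
    apply Rsum_err. intros i Hi. apply in_seq in Hi.
    apply pts_bound; try lra. apply Heta. lia. }
  assert (HG : 2 * sin Dl * G = Acst / 2 * (sin ((2 * INR K + 1) * Dl) - sin Dl)).
  { unfold G, g, l. rewrite telescope. rewrite plus_INR. simpl (INR 1).
    replace ((2 * (1 + INR K) - 1) * Dl) with ((2 * INR K + 1) * Dl) by ring.
    replace ((2 * 1 - 1) * Dl) with Dl by ring. reflexivity. }
  assert (HsD : sin Dl = d * cos a).
  { rewrite HDl, sin_2a. unfold a. rewrite sin_asin by lra. field. }
  assert (Hca : 1 - a^2/2 <= cos a <= 1).
  { split; [apply cos_lb_poly; lra|]. pose proof (COS_bound a). lra. }
  assert (Ha4 : a^2 <= 1/10000) by (clear - Ha3 Ha0 Hd1 Hd; simpl; nra).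
  set (th := (2 * INR K + 1) * Dl).
  assert (Hth : PI/2 - Dl < th <= PI/2 + Dl).
  { unfold th. split.
    - assert (INR t * Dl <= (2 * INR K + 1) * Dl) by (apply Rmult_le_compat_r; lra). lra.
    - assert ((2 * INR K + 1) * Dl <= (INR t + 1) * Dl) by (apply Rmult_le_compat_r; lra). lra. }
  assert (HPhi : 1 - Dl^2/2 <= sin th <= 1).
  { split; [|pose proof (SIN_bound th); lra].
    replace (sin th) with (cos (th - PI/2)) by (rewrite cos_sin; f_equal; ring).
    assert (1 - (th - PI/2)^2/2 <= cos (th - PI/2)) by (apply cos_lb_poly; lra).
    assert ((th - PI/2)^2 <= Dl^2) by (clear - Hth HDl0; simpl; nra). lra. }
  assert (HsD1 : 0 <= sin Dl <= Dl).
  { rewrite HsD. split. apply Rmult_le_pos; lra. rewrite <- HsD. apply sin_le_id; lra. }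
  assert (HG2 : Rabs (2 * d * G - Acst / 2) <= 200 * d).
  { assert (E1 : (2 * d * G - Acst / 2) * cos a = Acst / 2 * (sin th - sin Dl - cos a)).
    { assert (2 * d * G * cos a = 2 * sin Dl * G) by (rewrite HsD; ring).
      replace ((2 * d * G - Acst / 2) * cos a) with (2 * d * G * cos a - Acst / 2 * cos a) by ring.
      rewrite H, HG. fold th. ring. }
    assert (Hb : Rabs (sin th - sin Dl - cos a) <= 2 * d).
    { apply Rabs_le. assert (HDd : Dl <= 101/100 * d) by lra.
      assert (Dl^2 <= Dl * (1/20)) by (simpl; rewrite Rmult_1_r; apply Rmult_le_compat_l; lra).
      assert (a^2 <= d) by (simpl; rewrite Rmult_1_r; assert (a * a <= a * 1) by (apply Rmult_le_compat_l; lra); lra).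
      lra. }
    assert (Hc2 : 1/2 <= cos a) by lra.
    assert (Rabs (2 * d * G - Acst / 2) * cos a <= Acst / 2 * (2 * d)).
    { rewrite <- (Rabs_pos_eq (cos a)) by lra. rewrite <- Rabs_mult, E1, Rabs_mult, Rabs_pos_eq by lra.
      apply Rmult_le_compat_l; lra. }
    assert (Rabs (2 * d * G - Acst / 2) * (1/2) <= Rabs (2 * d * G - Acst / 2) * cos a)
      by (apply Rmult_le_compat_l; [apply Rabs_pos|lra]).
    clear - H H0 HA Hd. nra. }
  assert (HKd : INR K * d <= 1).
  { assert (2 * INR K * (2 * a) <= PI / 2) by (rewrite <- HDl; assert (2 * INR K * Dl <= INR t * Dl) by (apply Rmult_le_compat_r; lra); lra).
    assert (INR K * a <= 1) by lra. pose proof (pos_INR K).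
    assert (INR K * (d/2) <= INR K * a) by (apply Rmult_le_compat_l; lra). lra. }
  assert (HMd : INR (M4 d) * d^3 - Acst / 2 =
     d * (P0 * d^2 - Acst / 2) + d * (Acst / 2) + 2 * d * (S * d^2 - G) + (2 * d * G - Acst / 2))
     by (rewrite HM; simpl; ring).
  assert (HMb : Rabs (INR (M4 d) * d^3 - Acst / 2) <= 2300 * d).
  { rewrite HMd.
    assert (Rabs (d * (P0 * d^2 - Acst / 2)) <= d * (1000 * d)).
    { rewrite Rabs_mult, Rabs_pos_eq by lra. apply Rmult_le_compat_l; lra. }
    assert (Rabs (d * (Acst / 2)) <= d * 50) by (rewrite Rabs_pos_eq; [|apply Rmult_le_pos]; nra).
    assert (Rabs (2 * d * (S * d^2 - G)) <= 2 * d * (INR K * (1000 * d))).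
    { rewrite Rabs_mult, (Rabs_pos_eq (2 * d)) by lra. apply Rmult_le_compat_l; lra. }
    assert (2 * d * (INR K * (1000 * d)) = 2000 * d * (INR K * d)) by ring.
    assert (2000 * d * (INR K * d) <= 2000 * d * 1) by (apply Rmult_le_compat_l; lra).
    assert (d * (1000 * d) <= 10 * d) by nra.
    pose proof (Rabs_triang (d * (P0 * d ^ 2 - Acst / 2) + d * (Acst / 2) + 2 * d * (S * d ^ 2 - G)) (2 * d * G - Acst / 2)).
    pose proof (Rabs_triang (d * (P0 * d ^ 2 - Acst / 2) + d * (Acst / 2)) (2 * d * (S * d ^ 2 - G))).
    pose proof (Rabs_triang (d * (P0 * d ^ 2 - Acst / 2)) (d * (Acst / 2))).
    lra. }
  assert (Hfin : INR (M4 d) / S4 * (d / 2) ^ 3 - 1 / (4 * sqrt 3) =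
                 (INR (M4 d) * d^3 - Acst / 2) / (16 * PI^2)).
  { unfold S4, Acst. field. split; lra. }
  rewrite Hfin. unfold Rdiv. rewrite Rabs_mult, (Rabs_pos_eq (/ (16 * PI^2))).
  2: { apply Rlt_le, Rinv_0_lt_compat. simpl; nra. }
  assert (/ (16 * PI^2) <= 1/100).
  { replace (1/100) with (/ 100) by field. apply Rinv_le_contravar; [lra|]. simpl; nra. }
  assert (0 <= Rabs (INR (M4 d) * d ^ 3 - Acst / 2)) by apply Rabs_pos.
  assert (Rabs (INR (M4 d) * d ^ 3 - Acst / 2) * / (16 * PI ^ 2) <= 2300 * d * (1/100)).
  { apply Rmult_le_compat; try lra. apply Rlt_le, Rinv_0_lt_compat. simpl; nra. }
  lra.
Qed.

Theorem lemma1 :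
  filterlim (fun d : R => INR (M4 d) / S4 * (d / 2) ^ 3) (at_right 0)
    (locally (1 / (4 * sqrt 3))).
Proof.
  apply filterlim_locally. intros eps.
  assert (Hd0 : 0 < Rmin (1/100) (eps / 25)).
  { apply Rmin_pos; [lra|]. destruct eps; simpl; lra. }
  exists (mkposreal _ Hd0). intros y Hy Hpos.
  change (Rabs (INR (M4 y) / S4 * (y / 2) ^ 3 - 1 / (4 * sqrt 3)) < eps).
  assert (Hy' : Rabs (y - 0) < Rmin (1/100) (eps / 25)) by exact Hy.
  rewrite Rminus_0_r, Rabs_pos_eq in Hy' by lra.
  assert (y <= 1/100) by (pose proof (Rmin_l (1/100) (eps/25)); lra).
  assert (y < eps / 25) by (pose proof (Rmin_r (1/100) (eps/25)); lra).
  pose proof (main_bound y Hpos H). lra.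
Qed.
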